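(* Let $L \in \mathbb{N}$, $q \in [1,\infty]$, $c > 0$, and $N_0,\dots,N_L \in \mathbb{N}$. Then every $R(\Phi) \in \mathcal{H}_{(N_0,\dots,N_L),c}^q$ satisfies \[ \mathrm{Lip}_{\ell^2} ( R(\Phi) ) \leq \begin{cases} c^{L} & \text{if } q \leq 2, \\ c^{L} \cdot (\sqrt{N_0 N_L} \cdot N_{1} \cdots N_{L-1})^{1 - 2 / q} & \text{if } q \geq 2 . \end{cases} \]
   Context: $\varrho(x)=\max\{0,x\}$ componentwise. For $\Phi=((W^i,b^i))_{i=1}^L$, $W^i\in\mathbb{R}^{N_i\times N_{i-1}}$, $b^i\in\mathbb{R}^{N_i}$, the realization $R(\Phi):\mathbb{R}^{N_0}\to\mathbb{R}^{N_L}$ is $R(\Phi)(x)=x^L$ with $x^0=x$, $x^i=\varrho(W^ix^{i-1}+b^i)$ for $1\le i\le L-1$, $x^L=W^Lx^{L-1}+b^L$. For matrices/vectors $\|\cdot\|_{\ell^q}$ is the entrywise $\ell^q$ norm (max absolute entry for $q=\infty$), $\|\Phi\|_{\ell^q}=\max_i\max\{\|W^i\|_{\ell^q},\|b^i\|_{\ell^q}\}$, and $\mathcal{H}^q_{(N_0,\dots,N_L),c}=\{R(\Phi):\|\Phi\|_{\ell^q}\le c\}$. For $f:\mathbb{R}^d\to\mathbb{R}^k$, $\mathrm{Lip}_{\ell^2}(f)=\sup_{x\ne y}\|f(x)-f(y)\|_{\ell^2}/\|x-y\|_{\ell^2}$. For $q=\infty$, $2/q=0$. *)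

(* Defs.v *)
From HB Require Import structures.
From mathcomp Require Import all_boot all_order all_algebra.
From mathcomp Require Import all_classical all_reals.
From mathcomp Require Import ereal exp.
Set Implicit Arguments. Unset Strict Implicit. Unset Printing Implicit Defensive.
Import Order.TTheory GRing.Theory Num.Theory.
Local Open Scope ring_scope.

Section Defs.
Variable R : realType.

Definition relu m (v : 'cV[R]_m) : 'cV[R]_m := map_mx (fun t => Num.max t 0) v.

Definition lq_norm (q : \bar R) m n (A : 'M[R]_(m, n)) : R :=
  match q with
  | EFin r => (\sum_(i < m) \sum_(j < n) `|A i j| `^ r) `^ r^-1
  | +oo%E => \big[Num.max/0]_(i < m) \big[Num.max/0]_(j < n) `|A i j|
  | -oo%E => 0
  end.

Definition l2 m (v : 'cV[R]_m) : R := Num.sqrt (\sum_(i < m) v i 0 ^+ 2).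

(* Network Phi = ((W^i, b^i))_{i=1}^L with architecture N 0, ..., N L:
   W i : weight of layer i+1 (N_{i+1} x N_i), b i : bias of layer i+1. Only
   i < L are used. *)
Fixpoint hidden (N : nat -> nat) (W : forall i, 'M[R]_(N i.+1, N i))
  (b : forall i, 'cV[R]_(N i.+1)) (x : 'cV[R]_(N 0)) (k : nat) : 'cV[R]_(N k) :=
  match k as k0 return 'cV[R]_(N k0) with
  | 0 => x
  | k'.+1 => relu (W k' *m hidden W b x k' + b k')
  end.

Definition realization (N : nat -> nat) (L : nat) (W : forall i, 'M[R]_(N i.+1, N i))
  (b : forall i, 'cV[R]_(N i.+1)) (x : 'cV[R]_(N 0)) : 'cV[R]_(N L) :=
  match L as l return 'cV[R]_(N l) with
  | 0 => x
  | L'.+1 => W L' *m hidden W b x L' + b L'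
  end.

Definition net_norm (q : \bar R) (N : nat -> nat) (L : nat)
  (W : forall i, 'M[R]_(N i.+1, N i)) (b : forall i, 'cV[R]_(N i.+1)) : R :=
  \big[Num.max/0]_(i < L) Num.max (lq_norm q (W i)) (lq_norm q (b i)).

Definition Lip_l2 d k (f : 'cV[R]_d -> 'cV[R]_k) : \bar R :=
  ereal_sup [set z | exists x y : 'cV[R]_d, x != y /\
                     z = (l2 (f x - f y) / l2 (x - y))%:E].

Definition exp_q (q : \bar R) : R :=
  match q with
  | EFin r => 1 - 2 / r
  | _ => 1
  end.
End Defs.

(* Main.v *)
Require Import Defs.
From HB Require Import structures.
From mathcomp Require Import all_boot all_order all_algebra.
From mathcomp Require Import all_classical all_reals.
From mathcomp Require Import ereal exp.
From mathcomp Require Import ring lra.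
Import Order.TTheory GRing.Theory Num.Theory.
Local Open Scope ring_scope.

Section Aux.
Variable R : realType.

Lemma powRV (x p : R) : 0 <= x -> (x^-1) `^ p = (x `^ p)^-1.
Proof.
rewrite le_eqVlt => /predU1P[<-|x0]; first by rewrite invr0; case: (p =P 0) => [->|/eqP p0]; rewrite ?powRr0 ?invr1 // powR0 // invr0.
by rewrite /powR invr_eq0 gt_eqF // lnV ?posrE // mulrN expRN.
Qed.

Lemma powR_div (x y p : R) : 0 <= x -> 0 <= y -> (x / y) `^ p = x `^ p / y `^ p.
Proof. by move=> x0 y0; rewrite powRM ?invr_ge0 // powRV. Qed.

Lemma term_le_sum (T : finType) (F : T -> R) k : (forall i, 0 <= F i) -> F k <= \sum_i F i.
Proof. by move=> F0; rewrite (bigD1 k) //= lerDl sumr_ge0. Qed.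

Lemma lqA (T : finType) (f : T -> R) r : 1 <= r -> r <= 2 ->
  \sum_k f k ^+ 2 <= ((\sum_k `|f k| `^ r) `^ r^-1) ^+ 2.
Proof.
move=> r1 r2.
have r0 : 0 < r by lra.
set S := \sum_k _; set M := S `^ r^-1.
have S0 : 0 <= S by apply: sumr_ge0 => k _; apply: powR_ge0.
have Mr : M `^ r = S by rewrite -powRrM mulVf ?gt_eqF // powRr1.
have fM k : `|f k| <= M.
  rewrite -[`|f k|](@powRr1 _ `|f k|) // -[1](@mulfV _ r) ?gt_eqF // powRrM.
  apply: ge0_ler_powR; rewrite ?nnegrE ?powR_ge0 //; first by rewrite invr_ge0 ltW.
  by apply: term_le_sum => i; apply: powR_ge0.
have key x : 0 <= x -> x `^ 2 = x `^ r * x `^ (2 - r).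
  by move=> x0; rewrite -powRD ?subrKC //; apply/implyP; rewrite pnatr_eq0.
apply: (@le_trans _ _ (\sum_k `|f k| `^ r * M `^ (2 - r))).
  apply: ler_sum => k _.
  rewrite -real_normK ?num_real // -powR_mulrn // key //.
  apply: ler_wpM2l; first exact: powR_ge0.
  by apply: ge0_ler_powR; rewrite ?nnegrE ?powR_ge0 //; lra.
rewrite -mulr_suml -/S -Mr -key ?powR_mulrn //; exact: powR_ge0.
Qed.


Lemma lqB (T : finType) (f : T -> R) r : 2 <= r ->
  \sum_k f k ^+ 2 <= #|T|%:R `^ (1 - 2 / r) * ((\sum_k `|f k| `^ r) `^ r^-1) ^+ 2.
Proof.
move=> r2.
have [->|r2'] := eqVneq r 2.
  by rewrite divff ?pnatr_eq0 // subrr powRr0 mul1r; apply: lqA; lra.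
have {r2'} r2 : 2 < r by rewrite lt_neqAle eq_sym r2' r2.
have r0 : 0 < r by lra.
set S := \sum_k _; set M := S `^ r^-1.
have S0 : 0 <= S by apply: sumr_ge0 => k _; apply: powR_ge0.
have M0 : 0 <= M by apply: powR_ge0.
have [SE|Sgt0] := eqVneq S 0.
  have fk k : f k = 0.
    have /(_ k isT) := @psumr_eq0P _ _ predT (fun i => `|f i| `^ r) (fun i _ => powR_ge0 `|f i| r) SE.
    by move/powR_eq0_eq0/normr0_eq0.
  rewrite big1 ?mulr_ge0 ?powR_ge0 ?sqr_ge0 // => k _; by rewrite fk expr0n.
have {}Sgt0 : 0 < S by rewrite lt_neqAle eq_sym Sgt0 S0.
have [k0 _] : exists k0 : T, true.
  case: (pickP (@predT T)) => [k _|H]; first by exists k.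
  by move: Sgt0; rewrite /S big_pred0 ?ltxx.
set n := #|T|.
have n0 : 0 < n%:R :> R by rewrite ltr0n /n; apply/card_gt0P; exists k0.
have Mr : M `^ r = S by rewrite -powRrM mulVf ?gt_eqF // powRr1.
have Mgt0 : 0 < M by rewrite powR_gt0.
set P := r / 2; set Q := (1 - 2 / r)^-1.
have P0 : 0 < P by rewrite /P; lra.
have e0 : 0 < 1 - 2 / r by rewrite subr_gt0 ltr_pdivrMr // mul1r.
have Q0 : 0 < Q by rewrite invr_gt0.
have PQ : P^-1 + Q^-1 = 1 by rewrite invrK /P invf_div addrC subrK.
set K := n%:R `^ (1 - 2 / r).
have K0 : 0 < K by rewrite powR_gt0.
have young k : (f k ^+ 2 / M ^+ 2) * K^-1 <= (`|f k| `^ r / S) / P + n%:R^-1 / Q.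
  have := @conjugate_powR _ (f k ^+ 2 / M ^+ 2) (n%:R `^ (- Q^-1)) P Q.
  rewrite divr_ge0 ?sqr_ge0 ?powR_ge0 // => /(_ isT isT P0 Q0 PQ).
  rewrite powRN invrK -/K.
  rewrite (powRV _ _ (ltW K0)) /K -powRrM /Q mulfV ?gt_eqF // powRr1 ?ler0n // -/K -/Q.
  suff -> : (f k ^+ 2 / M ^+ 2) `^ P = `|f k| `^ r / S by [].
  clearbody M; rewrite powR_div ?sqr_ge0 //.
  rewrite -real_normK ?num_real // -[M ^+ 2]powR_mulrn // -!powR_mulrn ?normr_ge0 //.
  by rewrite -!powRrM /P mulrCA divff ?pnatr_eq0 // mulr1 Mr.
have : \sum_k (f k ^+ 2 / M ^+ 2 / K) <= \sum_k (`|f k| `^ r / S / P + n%:R^-1 / Q).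
  by apply: ler_sum => k _; exact: young.
rewrite big_split /= -!mulr_suml -/S sumr_const -/n divff ?gt_eqF //.
rewrite -[n%:R^-1 *+ n]mulr_natr mulVf ?gt_eqF // !div1r PQ.
by rewrite ler_pdivrMr // mul1r ler_pdivrMr ?exprn_gt0.
Qed.


Lemma cs (T : finType) (a v : T -> R) :
  (\sum_j a j * v j) ^+ 2 <= (\sum_j a j ^+ 2) * (\sum_j v j ^+ 2).
Proof.
set A := \sum_j a j ^+ 2; set B := \sum_j a j * v j; set V := \sum_j v j ^+ 2.
have A0 : 0 <= A by apply: sumr_ge0 => j _; apply: sqr_ge0.
have V0 : 0 <= V by apply: sumr_ge0 => j _; apply: sqr_ge0.
have [AE|An0] := eqVneq A 0.
  have a0 j : a j = 0.
    have /(_ j isT) := @psumr_eq0P _ _ predT (fun i => a i ^+ 2) (fun i _ => sqr_ge0 (a i)) AE.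
    by move/eqP; rewrite sqrf_eq0 => /eqP.
  by rewrite /B big1 ?expr0n ?AE ?mul0r // => j _; rewrite a0 mul0r.
have Agt0 : 0 < A by rewrite lt_neqAle eq_sym An0 A0.
set t := B / A.
have E : t ^+ 2 * A - 2 * t * B + V = \sum_j (a j * t - v j) ^+ 2.
  rewrite /A /B /V !mulr_sumr -sumrB -big_split /=; apply: eq_bigr => j _; ring.
have : 0 <= t ^+ 2 * A - 2 * t * B + V by rewrite E; apply: sumr_ge0 => j _; apply: sqr_ge0.
have -> : t ^+ 2 * A - 2 * t * B + V = V - B ^+ 2 / A.
  by rewrite /t; field; rewrite An0.
by rewrite subr_ge0 ler_pdivrMr // mulrC.
Qed.

Definition sq {m} (v : 'cV[R]_m) := \sum_i v i 0 ^+ 2.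
Definition frob2 {m n} (W : 'M[R]_(m, n)) := \sum_i \sum_j W i j ^+ 2.

Lemma sq_ge0 m (v : 'cV[R]_m) : 0 <= sq v.
Proof. by apply: sumr_ge0 => i _; apply: sqr_ge0. Qed.

Lemma frob2_ge0 m n (W : 'M[R]_(m, n)) : 0 <= frob2 W.
Proof. by apply: sumr_ge0 => i _; apply: sumr_ge0 => j _; apply: sqr_ge0. Qed.

Lemma sq_mul m n (W : 'M[R]_(m, n)) (v : 'cV[R]_n) : sq (W *m v) <= frob2 W * sq v.
Proof.
rewrite /sq /frob2 mulr_suml; apply: ler_sum => i _; rewrite mxE.
exact: cs.
Qed.

Lemma relu_sq (a b : R) : (Num.max a 0 - Num.max b 0) ^+ 2 <= (a - b) ^+ 2.
Proof.
have sa := sqr_ge0 a; have sb := sqr_ge0 b.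
rewrite /Num.max; case: (ltP a 0) => ha; case: (ltP b 0) => hb.
- by rewrite subrr expr0n /= sqr_ge0.
- have : a * b <= 0 by rewrite mulr_le0_ge0 // ltW.
  rewrite !expr2; nra.
- have : b * a <= 0 by rewrite mulr_le0_ge0 // ltW.
  rewrite !expr2; nra.
- by [].
Qed.

Lemma sq_relu m (x y : 'cV[R]_m) : sq (relu x - relu y) <= sq (x - y).
Proof.
rewrite /sq; apply: ler_sum => i _; rewrite !mxE; exact: relu_sq.
Qed.


Lemma hidden_lip (N : nat -> nat) (W : forall i, 'M[R]_(N i.+1, N i))
  (b : forall i, 'cV[R]_(N i.+1)) x y k :
  sq (hidden W b x k - hidden W b y k) <= (\prod_(i < k) frob2 (W i)) * sq (x - y).
Proof.
elim: k => [|k IH]; first by rewrite big_ord0 mul1r.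
rewrite /= (le_trans (sq_relu _ _ _)) //.
rewrite opprD addrACA subrr addr0 -mulmxBr.
rewrite (le_trans (sq_mul _ _ _ _)) // big_ord_recr /= [_ * frob2 _]mulrC -mulrA.
by rewrite ler_wpM2l ?frob2_ge0.
Qed.

Lemma real_lip (N : nat -> nat) (W : forall i, 'M[R]_(N i.+1, N i))
  (b : forall i, 'cV[R]_(N i.+1)) x y L :
  sq (realization L W b x - realization L W b y) <= (\prod_(i < L) frob2 (W i)) * sq (x - y).
Proof.
case: L => [|L]; first by rewrite big_ord0 mul1r.
rewrite /= opprD addrACA subrr addr0 -mulmxBr.
rewrite (le_trans (sq_mul _ _ _ _)) // big_ord_recr /= [_ * frob2 _]mulrC -mulrA.
by rewrite ler_wpM2l ?frob2_ge0 // hidden_lip.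
Qed.


Lemma frob_le2 m n (W : 'M[R]_(m, n)) r : 1 <= r -> r <= 2 ->
  frob2 W <= (lq_norm r%:E W) ^+ 2.
Proof.
move=> r1 r2; rewrite /frob2 /lq_norm !pair_bigA /=.
exact: lqA.
Qed.

Lemma frob_ge2 m n (W : 'M[R]_(m, n)) r : 2 <= r ->
  frob2 W <= (m * n)%:R `^ (1 - 2 / r) * (lq_norm r%:E W) ^+ 2.
Proof.
move=> r2; rewrite /frob2 /lq_norm !pair_bigA /=.
have := lqB _ [eta (fun p : 'I_m * 'I_n => W p.1 p.2)] r r2.
by rewrite card_prod !card_ord.
Qed.

Lemma bigmax_ge0 (I : finType) (F : I -> R) : 0 <= \big[Num.max/0]_(i : I) F i.
Proof. by elim/big_rec: _ => // i x _ hx; rewrite le_max hx orbT. Qed.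

Lemma frob_oo m n (W : 'M[R]_(m, n)) :
  frob2 W <= (m * n)%:R * (lq_norm +oo%E W) ^+ 2.
Proof.
rewrite /frob2 /lq_norm pair_bigA /=.
set M := \big[Num.max/0]_(i < m) _.
have H (p : 'I_m * 'I_n) : W p.1 p.2 ^+ 2 <= M ^+ 2.
  rewrite -real_normK ?num_real //; apply: lerXn2r; rewrite ?nnegrE ?normr_ge0 ?bigmax_ge0 //.
  apply: le_trans (le_bigmax _ (fun i => \big[Num.max/0]_(j < n) `|W i j|) p.1).
  exact: (le_bigmax _ (fun j => `|W p.1 j|) p.2).
apply: le_trans (ler_sum _ (fun p _ => H p)) _.
by rewrite sumr_const card_prod !card_ord mulr_natl.
Qed.


Lemma prod_powR (L : nat) (X : nat -> R) e : (forall i, 0 <= X i) ->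
  \prod_(i < L) X i `^ e = (\prod_(i < L) X i) `^ e.
Proof.
move=> X0; elim: L => [|L IH]; first by rewrite !big_ord0 powR1.
rewrite !big_ord_recr /= IH powRM //; exact: prodr_ge0.
Qed.

Lemma prodN (N : nat -> nat) (L : nat) : (0 < L)%N ->
  \prod_(i < L) ((N i.+1 * N i)%:R : R) =
  (Num.sqrt ((N 0)%:R * (N L)%:R) * \prod_(1 <= i < L) (N i)%:R) ^+ 2.
Proof.
case: L => // L _.
rewrite exprMn sqr_sqrtr ?mulr_ge0 ?ler0n // big_add1 /= big_mkord.
under eq_bigr do rewrite natrM.
rewrite big_split /= big_ord_recr big_ord_recl /=.
have -> : \prod_(i < L) (N (bump 0 i))%:R = \prod_(i < L) (N i.+1)%:R :> R by apply: eq_bigr.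
ring.
Qed.

Lemma Lip_bound d k (f : 'cV[R]_d -> 'cV[R]_k) (K B : R) : 0 <= B -> K <= B ^+ 2 ->
  (forall x y, sq (f x - f y) <= K * sq (x - y)) -> (Lip_l2 f <= B%:E)%E.
Proof.
move=> B0 KB H; apply: ge_ereal_sup => z [x [y [xy ->]]]; rewrite lee_fin.
have s0 : 0 < sq (x - y).
  rewrite lt_neqAle sq_ge0 andbT eq_sym; apply/negP => /eqP S0.
  move: xy; rewrite -subr_eq0 => /eqP; apply; apply/matrixP => i j.
  rewrite (ord1 j) !mxE.
  have /(_ i isT) := @psumr_eq0P _ _ predT (fun i => (x - y) i 0 ^+ 2) (fun i _ => sqr_ge0 _) S0.
  by rewrite !mxE => /eqP; rewrite sqrf_eq0 => /eqP.
have -> : l2 (f x - f y) = Num.sqrt (sq (f x - f y)) by [].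
have -> : l2 (x - y) = Num.sqrt (sq (x - y)) by [].
rewrite ler_pdivrMr ?sqrtr_gt0 //.
rewrite -[B]ger0_norm // -sqrtr_sqr -sqrtrM ?sqr_ge0 // ler_sqrt ?mulr_ge0 ?sqr_ge0 ?sq_ge0 //.
apply: le_trans (H x y) _; apply: ler_wpM2r; [exact: sq_ge0 | exact: KB].
Qed.

End Aux.
Arguments sq {R m}.
Arguments frob2 {R m n}.
Arguments frob_le2 {R m n} W {r}.
Arguments frob_ge2 {R m n} W {r}.
Arguments frob_oo {R m n}.

Theorem lemma2p8 (R : realType) (L : nat) (q : \bar R) (c : R)
  (N : nat -> nat) (W : forall i, 'M[R]_(N i.+1, N i)) (b : forall i, 'cV[R]_(N i.+1)) :
  (0 < L)%N -> (1%:E <= q)%E -> 0 < c ->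
  net_norm q L W b <= c ->
  ((q <= 2%:E)%E -> (Lip_l2 (realization L W b) <= (c ^+ L)%:E)%E) /\
  ((2%:E <= q)%E -> (Lip_l2 (realization L W b) <=
     (c ^+ L * (Num.sqrt ((N 0)%:R * (N L)%:R) * \prod_(1 <= i < L) (N i)%:R)
        `^ exp_q q)%:E)%E).
Proof.
move=> L0 q1 c0 hn.
have hW (i : 'I_L) : lq_norm q (W i) <= c.
  apply: le_trans hn.
  apply: le_trans (le_bigmax _ (fun i : 'I_L => Num.max (lq_norm q (W i)) (lq_norm q (b i))) i).
  by rewrite le_max lexx.
split.
- move=> q2; move: q q1 q2 hW {hn} => [r| |] //= q1 q2 hW; rewrite ?lee_fin in q1 q2.
  apply: (@Lip_bound _ _ _ _ (\prod_(i < L) frob2 (W i))).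
  + exact: exprn_ge0 (ltW c0).
  + apply: le_trans (_ : _ <= \prod_(i < L) c ^+ 2) _.
      apply: ler_prod => i _; rewrite frob2_ge0 /=.
      apply: le_trans (frob_le2 (W i) q1 q2) _; apply: lerXn2r; rewrite ?nnegrE ?powR_ge0 ?(ltW c0) //.
      exact: hW.
    by rewrite prodr_const card_ord exprAC.
  + by move=> x y; apply: real_lip.
- move=> q2.
  have hF (i : 'I_L) : frob2 (W i) <= ((N i.+1 * N i)%:R `^ exp_q q) * c ^+ 2.
    move: q q1 q2 hW {hn} => [r| |] //= q1 q2 hW; rewrite ?lee_fin in q1 q2.
      apply: le_trans (frob_ge2 (W i) q2) _; apply: ler_wpM2l; first exact: powR_ge0.
      by apply: lerXn2r; rewrite ?nnegrE ?powR_ge0 ?(ltW c0) // hW.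
    apply: le_trans (frob_oo (W i)) _; rewrite powRr1 ?ler0n //; apply: ler_wpM2l; first exact: ler0n.
    by apply: lerXn2r; rewrite ?nnegrE ?bigmax_ge0 ?(ltW c0) // hW.
  set Y := Num.sqrt _ * _.
  have Y0 : 0 <= Y by rewrite mulr_ge0 ?sqrtr_ge0 // prodr_ge0 // => i _; rewrite ler0n.
  apply: (@Lip_bound _ _ _ _ (\prod_(i < L) frob2 (W i))).
  + by rewrite mulr_ge0 ?powR_ge0 ?exprn_ge0 ?(ltW c0).
  + apply: le_trans (_ : _ <= \prod_(i < L) ((N i.+1 * N i)%:R `^ exp_q q * c ^+ 2)) _.
      by apply: ler_prod => i _; rewrite frob2_ge0 /= hF.
    rewrite big_split /= prodr_const card_ord (@prod_powR R _ (fun i => (N i.+1 * N i)%:R)) => [|i]; last exact: ler0n.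
    rewrite (@prodN R) // -/Y [(c ^+ L * _) ^+ 2]exprMn.
    have -> : (Y `^ exp_q q) ^+ 2 = (Y ^+ 2) `^ exp_q q.
      by rewrite -!powR_mulrn ?powR_ge0 // powRAC.
    by rewrite mulrC -!exprM mulnC.
  + by move=> x y; apply: real_lip.
Qed.
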